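(* Let $\Theta$ be a finite simple oriented graph with simple cycles $C_1,\ldots,C_k$ ($k\geq1$) that does not contain two different cycles connected by an oriented path, and let $\Theta'$ be its maximal cycle-reachable subgraph. For every vertex $x\in V(\Theta')\setminus(V(C_1)\cup\cdots\cup V(C_k))$, either all oriented paths between $x$ and any cycle lead from $x$ into cycles, or all lead from cycles into $x$. Let $k_x$ be the number of oriented paths of non-negative length in $\Theta$ ending at $x$ in the first case, and the number of oriented paths of non-negative length in $\Theta$ beginning at $x$ in the second case. Then, for any deg-lex order on the free monoid on $V(\Theta)$, in every reduced word of $\mathrm{HK}_\Theta$ the letter $x$ occurs at most $k_x$ times.
   Context: $\mathrm{HK}_\Theta$ is the Hecke--Kiselman monoid of $\Theta$: generated by the vertices $x$, with $x^2=x$; $xy=yx$ if $x,y$ are not joined by an edge; $xyx=yxy=xy$ if $x\to y$. The maximal cycle-reachable subgraph $\Theta'$ is the full subgraph of $\Theta$ on all vertices lying on a cycle together with all vertices connected to at least one cycle by an oriented path (in either direction). A path of length $0$ at $x$ counts as exactly one path starting and ending at $x$. For a word $w$ and vertex $t$: $w\nrightarrow t$ means $t$ does not occur in $w$ and no letter $x$ of $w$ has $x\to t$; $t\nrightarrow w$ means $t$ does not occur in $w$ and no letter $y$ of $w$ has $t\to y$; $t\nleftrightarrow w$ means both. Given a deg-lex order on words (induced by a total order on vertices), a word is reduced if it has no factor of the form $twt$ with $w\nrightarrow t$, no factor $twt$ with $t\nrightarrow w$, and no factor $t_1wt_2$ with $t_1>t_2$ and $t_2\nleftrightarrow t_1w$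 (here $t,t_1,t_2$ are vertices, $w$ a word). *)

(* Defs.v *)
From mathcomp Require Import all_boot.
Set Implicit Arguments. Unset Strict Implicit. Unset Printing Implicit Defensive.

Section HK.
Variables (V : finType) (e : rel V).

Definition simple_cycle (c : seq V) : Prop := [/\ c != [::], uniq c & cycle e c].

Definition on_cycle (x : V) : Prop := exists2 c, simple_cycle c & x \in c.

Definition no_connected_cycles : Prop :=
  forall c1 c2, simple_cycle c1 -> simple_cycle c2 ->
  forall x y, x \in c1 -> y \in c2 -> connect e x y -> exists n, c2 = rot n c1.

Definition reaches_cycle (x : V) : Prop :=
  exists c, exists y, [/\ simple_cycle c, y \in c & connect e x y].
Definition reached_from_cycle (x : V) : Prop :=
  exists c, exists y, [/\ simple_cycle c, y \in c & connect e y x].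

Definition in_Theta' (x : V) : Prop :=
  on_cycle x \/ reaches_cycle x \/ reached_from_cycle x.

Definition is_opath (s : seq V) : bool :=
  if s is y :: s' then uniq s && path e y s' else false.

Definition npaths_ending_at (x : V) : nat :=
  \sum_(n < #|V|) #|[set t : n.+1.-tuple V | is_opath t && (last x t == x)]|.
Definition npaths_starting_at (x : V) : nat :=
  \sum_(n < #|V|) #|[set t : n.+1.-tuple V | is_opath t && (head x t == x)]|.

Definition not_into (w : seq V) (t : V) : bool :=
  (t \notin w) && all (fun y => ~~ e y t) w.
Definition not_outof (t : V) (w : seq V) : bool :=
  (t \notin w) && all (fun y => ~~ e t y) w.
Definition not_adj (t : V) (w : seq V) : bool := not_into w t && not_outof t w.

(* reduced word w.r.t. the deg-lex order induced by the vertex order given by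
   an injective ranking r (t1 > t2 iff r t1 > r t2) *)
Definition reduced (r : V -> nat) (w : seq V) : Prop :=
  (~ exists a u b t, w = a ++ t :: u ++ t :: b /\ (not_into u t \/ not_outof t u)) /\
  (~ exists a u b t1 t2, w = a ++ t1 :: u ++ t2 :: b /\ r t2 < r t1 /\
        not_adj t2 (t1 :: u)).

End HK.

(* Main.v *)
Require Import Defs.
From mathcomp Require Import all_boot zify.
Set Implicit Arguments. Unset Strict Implicit. Unset Printing Implicit Defensive.

Section Aux.
Variables (V : finType) (e : rel V).

Lemma closed_on_cycle x y : e x y -> connect e y x -> on_cycle e x.
Proof.
move=> exy /connectP [p pp Ex]; rewrite Ex in exy *; move: exy.
case: (shortenP pp) => p' pp' up' _ exy.
exists (y :: p'); last by rewrite mem_last.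
by split=> //; rewrite /cycle /= rcons_path pp' /= exy.
Qed.

Lemma cycle_connect c a b : simple_cycle e c -> a \in c -> b \in c -> connect e a b.
Proof.
case=> _ _ cc ac bc.
case: (rot_to ac) => i p Ep.
have : cycle e (a :: p) by rewrite -Ep rot_cycle.
rewrite /cycle rcons_path => /andP [pp _].
apply: (path_connect pp); by rewrite -Ep mem_rot.
Qed.

Lemma path_last_connect h p x : path e h p -> x \in h :: p -> connect e x (last h p).
Proof.
elim: p h => [|z p IH] h /=.
  by move=> _; rewrite inE => /eqP ->.
case/andP=> ehz pz; rewrite inE => /orP [/eqP ->|xin]; last exact: IH.
apply: connect_trans (connect1 ehz) _.
by apply: (path_connect pz); rewrite mem_last.
Qed.

Lemma path_head_connect h p x : path e h p -> x \in h :: p -> connect e h x.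
Proof. by move=> pp xin; apply: (path_connect pp). Qed.

Lemma split_first (x : V) s : x \in s -> exists u b, s = u ++ x :: b /\ x \notin u.
Proof.
elim: s => [|a s IH] //; rewrite inE; case: (eqVneq x a) => [->|nxa] /= H.
  by exists [::], s.
case: (IH H) => u [b [-> nu]]; exists (a :: u), b; split => //.
by rewrite inE negb_or nxa.
Qed.

Lemma gap_lemma (P : pred V) x w :
  (forall a u b, w = a ++ x :: u ++ x :: b -> x \notin u -> has P u) ->
  count_mem x w <= 1 + count P w.
Proof.
elim: {w}(size w).+1 {-2}w (ltnSn (size w)) => [//|n IH] [|a w] //= Hs H.
move: H; case: (eqVneq a x) => [->|nax] H; last first.
  rewrite add0n; apply: leq_trans (IH w Hs _) _.
    by move=> a' u b Ew; apply: (H (a :: a')); rewrite Ew.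
  by rewrite leq_add2l leq_addl.
case: (boolP (x \in w)) => xw; last first.
  by rewrite (count_memPn xw) add1n ltnS.
case: (split_first xw) => u [b [Ew nu]].
have hu : has P u by apply: (H [::] u b _ nu); rewrite Ew.
have Hb : size (x :: b) < n by move: Hs; rewrite Ew size_cat /=; lia.
have IHb : count_mem x (x :: b) <= 1 + count P (x :: b).
  apply: (IH (x :: b) Hb) => a' u' b' Eb; apply: (H (x :: u ++ a') u' b').
  by rewrite Ew Eb /= -catA.
move: IHb hu; rewrite Ew /= !count_cat (count_memPn nu) /= has_count; lia.
Qed.


Lemma closed_on_cycle2 x y : connect e x y -> e y x -> on_cycle e x.
Proof.
case/connectP=> [[|z p]] /= pp Ey; rewrite Ey.
  move=> exx; apply: (@ex_intro2 _ _ _ [:: x]); last by rewrite inE.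
  by split => //=; rewrite exx.
case/andP: pp => exz pz ey.
apply: (closed_on_cycle exz).
apply: connect_trans (connect1 ey).
by apply: (path_connect pz); rewrite mem_last.
Qed.

Lemma last_opath s a b : is_opath e s -> last a s = last b s.
Proof. by case: s. Qed.
Lemma head_opath s a b : is_opath e s -> head a s = head b s.
Proof. by case: s. Qed.

Lemma opath_rcons s x : ~ on_cycle e x -> is_opath e s -> e (last x s) x -> is_opath e (rcons s x).
Proof.
move=> nc; case: s => [|h s] //= /andP [u p] ex.
have xn : x \notin h :: s.
  apply/negP => xin; apply: nc.
  exact: (closed_on_cycle2 (path_last_connect p xin) ex).
move: u xn; rewrite mem_rcons rcons_uniq rcons_path p ex !inE !negb_or.
by case/andP => -> -> /andP [hx ->]; rewrite eq_sym hx.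
Qed.

Lemma opath_cons s x : ~ on_cycle e x -> is_opath e s -> e x (head x s) -> is_opath e (x :: s).
Proof.
move=> nc; case: s => [|h s] //= /andP [u p] ex.
rewrite u p ex !andbT /=.
apply/negP => xin; apply: nc.
exact: (closed_on_cycle ex (path_head_connect p xin)).
Qed.

Definition Aend n x := #|[set t : n.+1.-tuple V | is_opath e t && (last x t == x)]|.
Definition Astart n x := #|[set t : n.+1.-tuple V | is_opath e t && (head x t == x)]|.
Definition Bend n x := [set t : n.+1.-tuple V | is_opath e t && e (last x t) x].
Definition Bstart n x := [set t : n.+1.-tuple V | is_opath e t && e x (head x t)].

Lemma Aend_big x : Aend #|V| x = 0.
Proof.
apply/eqP; rewrite cards_eq0; apply/eqP/setP => t; rewrite inE in_set0.
apply/negbTE/negP => /andP [op _].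
have ut : uniq t by case: (tval t) op => // h s /andP [].
have := max_card (mem t); rewrite (card_uniqP ut) size_tuple ltnn //.
Qed.

Lemma Astart_big x : Astart #|V| x = 0.
Proof.
apply/eqP; rewrite cards_eq0; apply/eqP/setP => t; rewrite inE in_set0.
apply/negbTE/negP => /andP [op _].
have ut : uniq t by case: (tval t) op => // h s /andP [].
have := max_card (mem t); rewrite (card_uniqP ut) size_tuple ltnn //.
Qed.

Lemma Aend0 x : 0 < Aend 0 x.
Proof. by apply/card_gt0P; exists [tuple x]; rewrite inE /= eqxx. Qed.
Lemma Astart0 x : 0 < Astart 0 x.
Proof. by apply/card_gt0P; exists [tuple x]; rewrite inE /= eqxx. Qed.

Lemma Bend_part n x : \sum_(y | e y x) Aend n y = #|Bend n x|.
Proof.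
rewrite -sum1_card [RHS](partition_big (fun t : n.+1.-tuple V => last x t) (fun y => e y x)); last first.
  by move=> t; rewrite inE => /andP [].
apply: eq_bigr => y eyx; rewrite (sum1_card [pred t | (t \in Bend n x) && (last x t == y)]).
apply: eq_card => t; rewrite !inE.
case op: (is_opath e t) => //=.
rewrite (last_opath y x op).
by case: (eqVneq (last x t) y) => [->|]; rewrite ?eyx ?eqxx // andbF.
Qed.

Lemma Bstart_part n x : \sum_(y | e x y) Astart n y = #|Bstart n x|.
Proof.
rewrite -sum1_card [RHS](partition_big (fun t : n.+1.-tuple V => head x t) (fun y => e x y)); last first.
  by move=> t; rewrite inE => /andP [].
apply: eq_bigr => y eyx; rewrite (sum1_card [pred t | (t \in Bstart n x) && (head x t == y)]).
apply: eq_card => t; rewrite !inE.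
case op: (is_opath e t) => //=.
rewrite (head_opath y x op).
by case: (eqVneq (head x t) y) => [->|]; rewrite ?eyx ?eqxx // andbF.
Qed.

Lemma Bend_inj n x : ~ on_cycle e x -> #|Bend n x| <= Aend n.+1 x.
Proof.
move=> nc.
rewrite -(card_in_imset (f := fun t => rcons_tuple t x)); last first.
  by move=> t1 t2 _ _ E; apply: val_inj; apply: (@rcons_injl _ x); exact: (congr1 val E).
apply: subset_leq_card; apply/subsetP => _ /imsetP [t tB ->].
move: tB; rewrite !inE /= => /andP [op ex].
by rewrite last_rcons eqxx andbT opath_rcons.
Qed.

Lemma Bstart_inj n x : ~ on_cycle e x -> #|Bstart n x| <= Astart n.+1 x.
Proof.
move=> nc.
rewrite -(card_in_imset (f := fun t => cons_tuple x t)); last first.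
  by move=> t1 t2 _ _ E; apply: val_inj; case: (congr1 val E).
apply: subset_leq_card; apply/subsetP => _ /imsetP [t tB ->].
move: tB; rewrite !inE => /andP [op ex].
apply/andP; split; last by rewrite /= eqxx.
exact: (opath_cons nc op ex).
Qed.

Lemma Nend_rec x : ~ on_cycle e x ->
  1 + \sum_(y | e y x) npaths_ending_at e y <= npaths_ending_at e x.
Proof.
move=> nc.
change (1 + \sum_(y | e y x) \sum_(n < #|V|) Aend n y <= \sum_(n < #|V|) Aend n x).
rewrite exchange_big /=.
have H1 : \sum_(n < #|V|) \sum_(y | e y x) Aend n y <= \sum_(n < #|V|) Aend n.+1 x.
  by apply: leq_sum => n _; rewrite Bend_part Bend_inj.
have H2 := @big_ord_recl nat 0 addn #|V| (fun n : 'I_#|V|.+1 => Aend n x).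
have H3 := @big_ord_recr nat 0 addn #|V| (fun n : 'I_#|V|.+1 => Aend n x).
rewrite H2 /= in H3.
have E : \sum_(i < #|V|) Aend (bump 0 i) x = \sum_(i < #|V|) Aend i.+1 x.
  by apply: eq_bigr => i _; rewrite /bump leq0n add1n.
move: H3; rewrite E Aend_big addn0 => H3.
rewrite -H3; exact: leq_add (Aend0 x) H1.
Qed.

Lemma Nstart_rec x : ~ on_cycle e x ->
  1 + \sum_(y | e x y) npaths_starting_at e y <= npaths_starting_at e x.
Proof.
move=> nc.
change (1 + \sum_(y | e x y) \sum_(n < #|V|) Astart n y <= \sum_(n < #|V|) Astart n x).
rewrite exchange_big /=.
have H1 : \sum_(n < #|V|) \sum_(y | e x y) Astart n y <= \sum_(n < #|V|) Astart n.+1 x.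
  by apply: leq_sum => n _; rewrite Bstart_part Bstart_inj.
have H2 := @big_ord_recl nat 0 addn #|V| (fun n : 'I_#|V|.+1 => Astart n x).
have H3 := @big_ord_recr nat 0 addn #|V| (fun n : 'I_#|V|.+1 => Astart n x).
rewrite H2 /= in H3.
have E : \sum_(i < #|V|) Astart (bump 0 i) x = \sum_(i < #|V|) Astart i.+1 x.
  by apply: eq_bigr => i _; rewrite /bump leq0n add1n.
move: H3; rewrite E Astart_big addn0 => H3.
rewrite -H3; exact: leq_add (Astart0 x) H1.
Qed.


Lemma count_sum (P : pred V) w : count P w = \sum_(y | P y) count_mem y w.
Proof.
elim: w => [|a w IH] /=; first by rewrite big1.
rewrite IH big_split /=; congr (_ + _).
case Pa: (P a).
  rewrite (bigD1 a) //= eqxx big1 // => y /andP [_ /negbTE]; by rewrite eq_sym => ->.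
rewrite big1 // => y Py; case: (eqVneq a y) => // ay; by rewrite ay Py in Pa.
Qed.

Lemma count_le_end w :
  (forall a u b t, w = a ++ t :: u ++ t :: b -> ~~ not_into e u t) ->
  forall x, (forall z, connect e z x -> ~ on_cycle e z) ->
  count_mem x w <= npaths_ending_at e x.
Proof.
move=> nr x; move: {2}#|[pred z | connect e z x]| (leqnn #|[pred z | connect e z x]|) => m.
elim: m x => [|m IH] x Hm Hx.
  have : 0 < #|[pred z | connect e z x]| by apply/card_gt0P; exists x; rewrite !inE /= connect0.
  by rewrite leqn0 in Hm; rewrite (eqP Hm).
have nc : ~ on_cycle e x := Hx x (connect0 _ _).
apply: leq_trans (gap_lemma (P := fun z => e z x) _) _.
  move=> a u b Ew xu; have := nr a u b x Ew; rewrite /not_into xu /=.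
  by case/allPn => y yu /negPn eyx; apply/hasP; exists y.
rewrite count_sum; apply: leq_trans (Nend_rec nc); rewrite leq_add2l.
apply: leq_sum => y eyx; apply: IH; last first.
  by move=> z czy; apply: Hx; exact: connect_trans czy (connect1 eyx).
rewrite -ltnS; apply: leq_trans Hm.
apply: proper_card; rewrite properE; apply/andP; split.
  by apply/subsetP => z; rewrite !inE /= => czy; exact: connect_trans czy (connect1 eyx).
apply/subsetPn; exists x; rewrite !inE /= ?connect0 //.
by apply/negP => cxy; apply: nc; exact: closed_on_cycle2 cxy eyx.
Qed.

Lemma count_le_start w :
  (forall a u b t, w = a ++ t :: u ++ t :: b -> ~~ not_outof e t u) ->
  forall x, (forall z, connect e x z -> ~ on_cycle e z) ->
  count_mem x w <= npaths_starting_at e x.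
Proof.
move=> nr x; move: {2}#|[pred z | connect e x z]| (leqnn #|[pred z | connect e x z]|) => m.
elim: m x => [|m IH] x Hm Hx.
  have : 0 < #|[pred z | connect e x z]| by apply/card_gt0P; exists x; rewrite !inE /= connect0.
  by rewrite leqn0 in Hm; rewrite (eqP Hm).
have nc : ~ on_cycle e x := Hx x (connect0 _ _).
apply: leq_trans (gap_lemma (P := fun z => e x z) _) _.
  move=> a u b Ew xu; have := nr a u b x Ew; rewrite /not_outof xu /=.
  by case/allPn => y yu /negPn eyx; apply/hasP; exists y.
rewrite count_sum; apply: leq_trans (Nstart_rec nc); rewrite leq_add2l.
apply: leq_sum => y eyx; apply: IH; last first.
  by move=> z czy; apply: Hx; exact: connect_trans (connect1 eyx) czy.
rewrite -ltnS; apply: leq_trans Hm.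
apply: proper_card; rewrite properE; apply/andP; split.
  by apply/subsetP => z; rewrite !inE /= => czy; exact: connect_trans (connect1 eyx) czy.
apply/subsetPn; exists x; rewrite !inE /= ?connect0 //.
by apply/negP => cxy; apply: nc; exact: closed_on_cycle eyx cxy.
Qed.

End Aux.

Theorem lemma3p1 (V : finType) (e : rel V)
  (e_irr : irreflexive e)
  (e_asym : forall x y, e x y -> ~~ e y x)
  (ex_cycle : exists c, simple_cycle e c)
  (no_conn : no_connected_cycles e)
  (x : V) (xT : in_Theta' e x) (xnc : ~ on_cycle e x) :
  ((reaches_cycle e x /\ ~ reached_from_cycle e x) \/
   (reached_from_cycle e x /\ ~ reaches_cycle e x)) /\
  (forall (r : V -> nat), injective r ->
   forall w : seq V, reduced e r w ->
     (reaches_cycle e x -> count_mem x w <= npaths_ending_at e x) /\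
     (reached_from_cycle e x -> count_mem x w <= npaths_starting_at e x)).
Proof.
have notboth : reaches_cycle e x -> reached_from_cycle e x -> False.
  case=> c1 [y1 [sc1 y1c1 cxy1]] [c2 [y2 [sc2 y2c2 cy2x]]].
  have [n E] := no_conn c2 c1 sc2 sc1 y2 y1 y2c2 y1c1 (connect_trans cy2x cxy1).
  have y1c2 : y1 \in c2 by rewrite E mem_rot in y1c1.
  have cy1x : connect e y1 x := connect_trans (cycle_connect sc2 y1c2 y2c2) cy2x.
  case/connectP: cxy1 => [[|z p]] /= pp Ey1.
    by apply: xnc; exists c1 => //; rewrite -Ey1.
  case/andP: pp => exz pz; apply: xnc; apply: (closed_on_cycle exz).
  apply: connect_trans _ cy1x; rewrite Ey1; apply: (path_connect pz).
  by rewrite mem_last.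
split.
  case: xT => [//|[H|H]].
    by left; split => // H'; exact: notboth H H'.
  by right; split => // H'; exact: notboth H' H.
move=> r _ w [red1 _]; split.
  move=> H; apply: count_le_end.
    by move=> a u b t Ew; apply/negP => nu; apply: red1; exists a, u, b, t; split => //; left.
  move=> z czx [c sc zc]; apply: notboth H _; exists c, z; split => //.
move=> H; apply: count_le_start.
  by move=> a u b t Ew; apply/negP => nu; apply: red1; exists a, u, b, t; split => //; right.
move=> z czx [c sc zc]; apply: notboth _ H; exists c, z; split => //.
Qed.
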